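(* Let $k\ge1$, $t\ge 3$, and let $S_{t-1}$ be a set of representatives of all equivalence classes of binary linear $(t-1)$-CIS $[(t-1)k,k]$ codes, each given by a generator matrix $G_C$. Let $R$ be a set of representatives of the $\sim_1$-equivalence classes of $GL(k,2)$. Let $\overline{S_t}$ be the set of codes generated by the matrices $(G_C\mid B)$ with $C\in S_{t-1}$ and $B\in R$. Then every code in $\overline{S_t}$ is a $t$-CIS $[tk,k]$ code, and every $t$-CIS $[tk,k]$ code is equivalent to some code in $\overline{S_t}$; hence, removing equivalent codes from $\overline{S_t}$ and keeping one representative of each equivalence class yields a set $S_t$ of representatives of all inequivalent $t$-CIS codes of dimension $k$.
   Context: A binary linear $[tk,k]$ code is $t$-CIS if its coordinate set can be partitioned into $t$ pairwise disjoint information sets, an information set being a set of $k$ coordinates whose columns in a generator matrix are linearly independent. Two codes are equivalent if one is obtained from the other by a permutation of coordinates. For $A,B\in GL(k,2)$, $A\sim_1B$ iff $A=BP$ for some $k\times k$ permutation matrix $P$. *)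

(* Defs.v *)
From HB Require Import structures.
From mathcomp Require Import all_boot all_order all_algebra all_fingroup.
Set Implicit Arguments. Unset Strict Implicit. Unset Printing Implicit Defensive.
Import GRing.Theory.
Local Open Scope ring_scope.

(* A binary linear [n,k] code is given by a generator matrix G : 'M_(k,n) of
   rank k; the code is the row space of G. *)
Definition gen_mx (k n : nat) (G : 'M['F_2]_(k, n)) : bool := \rank G == k.

Definition cols_of (k n : nat) (G : 'M['F_2]_(k, n)) (I : {set 'I_n})
  : 'M['F_2]_(#|I|, k) := \matrix_(j < #|I|, i < k) G i (enum_val j).

Definition info_set (k n : nat) (G : 'M['F_2]_(k, n)) (I : {set 'I_n}) : Prop :=
  #|I| = k /\ row_free (cols_of G I).

(* t-CIS: the coordinate set is partitioned into t pairwise disjoint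
   information sets (blocks = fibres of a labelling f of coordinates by 'I_t). *)
Definition CIS (t k n : nat) (G : 'M['F_2]_(k, n)) : Prop :=
  exists f : {ffun 'I_n -> 'I_t}, forall j : 'I_t, info_set G [set x | f x == j].

Definition code_equiv (k n : nat) (G1 G2 : 'M['F_2]_(k, n)) : Prop :=
  exists s : 'S_n, (col_perm s G1 == G2)%MS.

Definition sim1 (k : nat) (A B : 'M['F_2]_k) : Prop :=
  exists s : 'S_k, A = B *m perm_mx s.

Definition CIS_reps (t k n : nat) (S : seq 'M['F_2]_(k, n)) : Prop :=
  (forall G, G \in S -> gen_mx G /\ CIS t G) /\
  (forall G, gen_mx G -> CIS t G -> exists2 H, H \in S & code_equiv G H) /\
  (forall G1 G2, G1 \in S -> G2 \in S -> code_equiv G1 G2 -> G1 = G2).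

Definition GL_reps (k : nat) (R : seq 'M['F_2]_k) : Prop :=
  (forall B, B \in R -> B \in unitmx) /\
  (forall A, A \in unitmx -> exists2 B, B \in R & sim1 A B) /\
  (forall B1 B2, B1 \in R -> B2 \in R -> sim1 B1 B2 -> B1 = B2).

(* Main.v *)
Require Import Defs.
From mathcomp Require Import all_boot all_order all_algebra all_fingroup.
Set Implicit Arguments. Unset Strict Implicit. Unset Printing Implicit Defensive.
Import GRing.Theory.
Local Open Scope ring_scope.

Definition indep (k n : nat) (G : 'M['F_2]_(k, n)) (I : {set 'I_n}) : Prop :=
  forall c : 'I_n -> 'F_2, (forall i, \sum_(x in I) c x * G i x = 0) ->
  forall x, x \in I -> c x = 0.

Lemma bigT n (F : 'I_n -> 'F_2) : \sum_(x in [set: 'I_n]) F x = \sum_x F x.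
Proof. by apply: eq_bigl => x; rewrite inE. Qed.

Lemma splitL m n (x : 'I_m) : split (lshift n x) = inl x.
Proof. exact: (unsplitK (inl x)). Qed.
Lemma splitR m n (x : 'I_n) : split (rshift m x) = inr x.
Proof. exact: (unsplitK (inr x)). Qed.

Lemma L1 (k m : nat) (A : 'M['F_2]_(k, m)) : row_free A^T <-> indep A setT.
Proof.
split.
- move=> fr c Hc x _.
  have : (\row_x c x) *m A^T = 0.
    apply/rowP => i; rewrite !mxE; rewrite -[RHS](Hc i) bigT.
    by apply: eq_bigr => y _; rewrite !mxE.
  move=> H; have := row_free_inj fr (etrans H (esym (mul0mx _ A^T))).
  by move/rowP/(_ x); rewrite !mxE.
- move=> Hi; apply: inj_row_free => v Hv; apply/rowP => x; rewrite mxE.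
  apply: (Hi (fun x => v 0 x)) => // i.
  have := congr1 (fun M : 'M_(1, k) => M 0 i) Hv; rewrite !mxE => E.
  rewrite -[RHS]E; by rewrite bigT; apply: eq_bigr => y _; rewrite !mxE.
Qed.

Lemma L2 (k n n' : nat) (G : 'M['F_2]_(k, n)) (G' : 'M['F_2]_(k, n'))
  (h : 'I_n' -> 'I_n) (I' : {set 'I_n'}) :
  injective h -> (forall i x, G' i x = G i (h x)) ->
  indep G' I' <-> indep G (h @: I').
Proof.
move=> hi hG; split.
- move=> Hi c Hc z /imsetP [x xI ->].
  apply: (Hi (fun x => c (h x))) xI => i.
  rewrite -[RHS](Hc i) big_imset /=; last by move=> a b _ _; apply: hi.
  by apply: eq_bigr => y _; rewrite hG.
- move=> Hi c' Hc x xI.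
  pose c z := if [pick y | h y == z] is Some y then c' y else 0.
  have ch y : c (h y) = c' y.
    rewrite /c; case: pickP => [y' /eqP/hi -> //|/(_ y)]; by rewrite eqxx.
  rewrite -ch; apply: Hi; last by apply: imset_f.
  move=> i; rewrite big_imset /=; last by move=> a b _ _; apply: hi.
  by rewrite -[RHS](Hc i); apply: eq_bigr => y _; rewrite ch hG.
Qed.

Lemma L3 (k n : nat) (G : 'M['F_2]_(k, n)) (I : {set 'I_n}) :
  row_free (cols_of G I) <-> indep G I.
Proof.
have -> : cols_of G I = (\matrix_(i < k, j < #|I|) G i (enum_val j))^T.
  by apply/matrixP => i j; rewrite !mxE.
have E : enum_val @: [set: 'I_#|I|] = I.
  apply/setP => x; apply/imsetP/idP => [[y _ ->]|xI]; first exact: enum_valP.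
  by exists (enum_rank_in xI x) => //; rewrite enum_rankK_in.
have key := iff_trans (L1 (\matrix_(i < k, j < #|I|) G i (enum_val j)))
  (@L2 _ _ _ G _ enum_val setT (@enum_val_inj _ _) (fun i x => mxE _ _ _ _)).
by rewrite E in key.
Qed.

Lemma rank_sub (k n m : nat) (A : 'M['F_2]_(k, n)) (h : 'I_m -> 'I_n) :
  (\rank (\matrix_(i, j) A i (h j)) <= \rank A)%N.
Proof.
have -> : \matrix_(i, j) A i (h j) = A *m \matrix_(x, j) (x == h j)%:R.
  apply/matrixP => i j; rewrite !mxE (bigD1 (h j)) //= mxE eqxx mulr1 big1 ?addr0 //.
  by move=> x /negbTE xn; rewrite mxE xn mulr0.
exact: mxrankM_maxl.
Qed.

Lemma unit_indep k (B : 'M['F_2]_k) : B \in unitmx -> indep B setT.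
Proof. by move=> u; apply/L1; rewrite row_free_unit unitmx_tr. Qed.

Lemma info_iff (k n : nat) (G : 'M['F_2]_(k, n)) (I : {set 'I_n}) :
  info_set G I <-> #|I| = k /\ indep G I.
Proof. by rewrite /info_set; split=> [][? /L3 ?]; split => //; apply/L3. Qed.

Lemma part1 (m k : nat) (G : 'M['F_2]_(k, m * k)) (B : 'M['F_2]_k) :
  CIS m G -> B \in unitmx ->
  gen_mx (row_mx G B) /\ CIS m.+1 (row_mx G B).
Proof.
move=> [g Hg] uB; split.
  rewrite /gen_mx eqn_leq rank_leq_row /=.
  have EB : \matrix_(i, j) (row_mx G B) i (rshift (m * k) j) = B.
    by apply/matrixP => i j; rewrite mxE row_mxEr.
  apply: leq_trans (rank_sub (row_mx G B) (@rshift (m * k) k)).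
  by rewrite EB mxrank_unit.
pose F := [ffun z => match split z with inl x => lift ord_max (g x)
                                     | inr _ => ord_max end] : {ffun 'I_(m * k + k) -> 'I_m.+1}.
exists F => j; apply/info_iff.
case: (unliftP ord_max j) => [j'|] ->.
- have -> : [set x | F x == lift ord_max j'] = lshift k @: [set x | g x == j'].
    apply/setP => z; rewrite inE ffunE; case: split_ordP => y ->.
      by rewrite mem_imset ?inE ?(inj_eq (@lift_inj _ _)) //; exact: lshift_inj.
    rewrite (negbTE (neq_lift _ _)); apply/esym/imsetP => [[x _ /eqP]].
    by rewrite eq_rlshift.
  have [cI /L3 iI] := Hg j'.
  split; first by rewrite card_imset //; exact: lshift_inj.
  by apply/(@L2 _ _ _ (row_mx G B) G (lshift k) _ (@lshift_inj _ _)
              (fun i x => esym (row_mxEl _ _ _ _))).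
- have -> : [set x | F x == ord_max] = @rshift (m * k) k @: [set: 'I_k].
    apply/setP => z; rewrite inE ffunE; case: split_ordP => y ->.
      rewrite eq_sym (negbTE (neq_lift _ _)); apply/esym/imsetP => [[x _ /eqP]].
      by rewrite eq_lrshift.
    rewrite eqxx; apply/esym; apply: imset_f; by rewrite inE.
  split; first by rewrite (card_imset _ (@rshift_inj _ _)) cardsT card_ord.
  apply/(@L2 _ _ _ (row_mx G B) B (@rshift (m * k) k) _ (@rshift_inj _ _)
              (fun i x => esym (row_mxEr _ _ _ _))).
  exact: unit_indep.
Qed.

Lemma eqmx_cp k n (A B : 'M['F_2]_(k, n)) s :
  (A :=: B)%MS -> (col_perm s A :=: col_perm s B)%MS.
Proof. by rewrite !col_permE; apply: eqmxMr. Qed.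

Lemma ce_refl k n (G : 'M['F_2]_(k, n)) : code_equiv G G.
Proof. by exists 1%g; rewrite col_perm1; apply/eqmxP; exact: eqmx_refl. Qed.

Lemma ce_sym k n (G1 G2 : 'M['F_2]_(k, n)) : code_equiv G1 G2 -> code_equiv G2 G1.
Proof.
move=> [s /eqmxP E]; exists s^-1%g; apply/eqmxP.
have E' : (col_perm s^-1%g (col_perm s G1) :=: col_perm s^-1%g G2)%MS.
  exact: eqmx_cp.
by rewrite -col_permM mulVg col_perm1 in E'; exact: eqmx_sym E'.
Qed.

Lemma ce_trans k n (G1 G2 G3 : 'M['F_2]_(k, n)) :
  code_equiv G1 G2 -> code_equiv G2 G3 -> code_equiv G1 G3.
Proof.
move=> [s1 /eqmxP E1] [s2 /eqmxP E2]; exists (s2 * s1)%g; apply/eqmxP.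
rewrite col_permM; apply: eqmx_trans E2.
exact: eqmx_cp.
Qed.

Definition code_equivb k n (G1 G2 : 'M['F_2]_(k, n)) :=
  [exists s : 'S_n, (col_perm s G1 == G2)%MS].

Lemma code_equivP k n (G1 G2 : 'M['F_2]_(k, n)) :
  reflect (code_equiv G1 G2) (code_equivb G1 G2).
Proof. by apply: (iffP existsP) => [][s h]; exists s. Qed.

Lemma rowspace k n (A B : 'M['F_2]_(k, n)) :
  (A == B)%MS -> \rank A = k -> exists2 M : 'M_k, M \in unitmx & B = M *m A.
Proof.
move=> E rA; have rB := eqmx_rank E.
move/andP: E => [_ BA].
exists (B *m pinvmx A); last by rewrite mulmxKpV.
rewrite -row_free_unit /row_free eqn_leq rank_leq_row /=.
have := mxrankM_maxl (B *m pinvmx A) A; rewrite mulmxKpV // -rB rA //.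
Qed.

Lemma info_rank k n (G : 'M['F_2]_(k, n)) I : info_set G I -> \rank G = k.
Proof.
move=> [cI fr]; apply/eqP; rewrite eqn_leq rank_leq_row /=.
have E : cols_of G I = (\matrix_(i < k, j < #|I|) G i (enum_val j))^T.
  by apply/matrixP => i j; rewrite !mxE.
move: fr; rewrite E; rewrite /row_free mxrank_tr => /eqP rk.
by have := rank_sub G (@enum_val _ (mem I)); rewrite rk cI.
Qed.

Lemma indep_unit k (B : 'M['F_2]_k) : indep B setT -> B \in unitmx.
Proof. by move/L1; rewrite row_free_unit unitmx_tr. Qed.

Lemma part2 (m k : nat) (H : 'M['F_2]_(k, m * k + k)) : (0 < m)%N -> CIS m.+1 H ->
  exists s : 'S_(m * k + k), exists G0 : 'M_(k, m * k), exists B0 : 'M_k,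
   [/\ col_perm s H = row_mx G0 B0, gen_mx G0, CIS m G0 & B0 \in unitmx].
Proof.
move=> m0 [f Hf].
set I := [set x | f x == ord_max].
have [cI iI] := (info_iff _ _).1 (Hf ord_max).
have cIc : #|~: I| = (m * k)%N.
  have := cardsC I; rewrite card_ord cI => E.
  by apply/eqP; rewrite -(eqn_add2l k) E addnC.
pose h (z : 'I_(m * k + k)) : 'I_(m * k + k) :=
  match split z with
  | inl x => enum_val (cast_ord (esym cIc) x)
  | inr y => enum_val (cast_ord (esym cI) y) end.
have hinj : injective h.
  move=> z1 z2; rewrite /h.
  case: split_ordP => x1 ->; case: split_ordP => x2 -> E.
  - by move/enum_val_inj/cast_ord_inj: E => ->.
  - have := enum_valP (cast_ord (esym cIc) x1).
    by rewrite E in_setC (enum_valP (cast_ord (esym cI) x2)).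
  - have := enum_valP (cast_ord (esym cIc) x2).
    by rewrite -E in_setC (enum_valP (cast_ord (esym cI) x1)).
  - by move/enum_val_inj/cast_ord_inj: E => ->.
pose s := perm hinj.
have hL x : s (lshift k x) = enum_val (cast_ord (esym cIc) x).
  by rewrite permE /h splitL.
have hR y : s (rshift (m * k) y) = enum_val (cast_ord (esym cI) y).
  by rewrite permE /h splitR.
exists s, (lsubmx (col_perm s H)), (rsubmx (col_perm s H)).
have B0u : rsubmx (col_perm s H) \in unitmx.
  apply: indep_unit.
  have Eset : (fun y => enum_val (cast_ord (esym cI) y)) @: [set: 'I_k] = I.
    apply/setP => x; apply/imsetP/idP => [[y _ ->]|xI]; first exact: enum_valP.
    exists (cast_ord cI (enum_rank_in xI x)); first by rewrite inE.
    by rewrite cast_ordK enum_rankK_in.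
  apply/(@L2 _ _ _ H (rsubmx (col_perm s H))
           (fun y => enum_val (cast_ord (esym cI) y)) setT).
  - by move=> a b /enum_val_inj/cast_ord_inj.
  - by move=> i y; rewrite !mxE hR.
  by rewrite Eset.
pose j0 : 'I_m := Ordinal m0.
pose g := [ffun x => odflt j0 (unlift ord_max (f (s (lshift k x))))].
have h0inj : injective (fun x => s (lshift k x)).
  by move=> a b /perm_inj/lshift_inj.
have CIS0 : CIS m (lsubmx (col_perm s H)).
  exists g => j.
  have EX : (fun x => s (lshift k x)) @: [set x | g x == j]
            = [set z | f z == lift ord_max j].
    apply/setP => z; apply/imsetP/idP.
    - move=> [x]; rewrite inE ffunE => /eqP gx ->; rewrite inE.
      have : s (lshift k x) \in ~: I by rewrite hL enum_valP.
      rewrite in_setC inE; move: gx.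
      by case: unliftP => [j' -> /= -> _|-> _]; rewrite ?eqxx.
    - rewrite inE => /eqP fz.
      case: (split_ordP (s^-1%g z)) => w Ew.
      + exists w; last by rewrite -Ew permKV.
        by rewrite inE ffunE -Ew permKV fz liftK /=.
      + have : s (rshift _ w) \in I by rewrite hR enum_valP.
        by rewrite -Ew permKV inE fz eq_sym (negbTE (neq_lift _ _)).
  have [cJ iJ] := (info_iff _ _).1 (Hf (lift ord_max j)).
  apply/info_iff; split.
    by rewrite -(card_imset _ h0inj) EX.
  apply/(@L2 _ _ _ H (lsubmx (col_perm s H)) _ _ h0inj).
    by move=> i x; rewrite !mxE.
  by rewrite EX.
split => //; first by rewrite hsubmxK.
by case: CIS0 => g' Hg'; apply/eqP; exact: info_rank (Hg' j0).
Qed.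

Lemma part2' (m k : nat) (S : seq 'M['F_2]_(k, m * k)) (R : seq 'M['F_2]_k) :
  (0 < m)%N -> CIS_reps m S -> GL_reps R ->
  forall H : 'M['F_2]_(k, m * k + k), CIS m.+1 H ->
     exists G B, [/\ G \in S, B \in R & code_equiv H (row_mx G B)].
Proof.
move=> m0 [_ [HS _]] [_ [HR _]] H cH.
have [s [G0 [B0 [EH gG0 cG0 uB0]]]] := part2 m0 cH.
have [G GS [s' /eqmxP EG]] := HS G0 gG0 cG0.
have [M uM EM] : exists2 M : 'M_k, M \in unitmx & G = M *m col_perm s' G0.
  apply: rowspace; first by apply/eqmxP.
  rewrite col_permE mxrankMfree; first exact/eqP.
  by rewrite row_free_unit unitmx_perm.
have uB1 : M *m B0 \in unitmx by rewrite unitmx_mul uM.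
have [B BR [p Ep]] := HR _ uB1.
have EB : B = M *m col_perm p B0.
  by rewrite col_permE mulmxA Ep -mulmxA -perm_mxM mulgV perm_mx1 mulmx1.
pose sig (z : 'I_(m * k + k)) : 'I_(m * k + k) :=
  match split z with
  | inl x => lshift k (s' x)
  | inr y => rshift (m * k) (p y) end.
have siginj : injective sig.
  move=> z1 z2; rewrite /sig.
  case: split_ordP => x1 ->; case: split_ordP => x2 -> /eqP;
    rewrite ?eq_shift // => /eqP/perm_inj ->//.
pose sg := perm siginj.
exists G, B; split => //.
exists (sg * s)%g; rewrite col_permM EH.
have -> : col_perm sg (row_mx G0 B0) = row_mx (col_perm s' G0) (col_perm p B0).
  apply/matrixP => i z; rewrite mxE permE /sig.
  by case: split_ordP => w ->; rewrite ?splitL ?splitR ?row_mxEl ?row_mxEr mxE.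
rewrite EM EB -mul_mx_row; apply/eqmxP; apply: eqmx_sym.
by apply: eqmxMfull; rewrite row_full_unit.
Qed.

Lemma main_gen (m k : nat) (S : seq 'M['F_2]_(k, m * k)) (R : seq 'M['F_2]_k) :
  (0 < m)%N -> CIS_reps m S -> GL_reps R ->
  (forall G B, G \in S -> B \in R ->
     gen_mx (row_mx G B) /\ CIS m.+1 (row_mx G B)) /\
  (forall H : 'M['F_2]_(k, m * k + k), gen_mx H -> CIS m.+1 H ->
     exists G B, [/\ G \in S, B \in R & code_equiv H (row_mx G B)]) /\
  (exists St : seq 'M['F_2]_(k, m * k + k),
     CIS_reps m.+1 St /\
     forall H, H \in St -> exists G B, [/\ G \in S, B \in R & H = row_mx G B]).
Proof.
move=> m0 HSr HRr.
have P1 : forall G B, G \in S -> B \in R ->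
     gen_mx (row_mx G B) /\ CIS m.+1 (row_mx G B).
  move=> G B GS BR; apply: part1; first exact: (HSr.1 G GS).2.
  exact: HRr.1.
have P2 : forall H : 'M['F_2]_(k, m * k + k), gen_mx H -> CIS m.+1 H ->
     exists G B, [/\ G \in S, B \in R & code_equiv H (row_mx G B)].
  by move=> H _; exact: part2'.
split; first exact: P1. split; first exact: P2.
pose Sb := [seq row_mx G B | G <- S, B <- R].
pose canon x := nth 0 Sb (find (code_equivb x) Sb).
have inSb y : y \in Sb -> exists G B, [/\ G \in S, B \in R & y = row_mx G B].
  by case/allpairsP => [[G B] [/= GS BR ->]]; exists G, B.
have canonP x : x \in Sb -> canon x \in Sb /\ code_equiv x (canon x).
  move=> xS; have hx : has (code_equivb x) Sb.
    by apply/hasP; exists x => //; apply/code_equivP; exact: ce_refl.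
  split; first by apply: mem_nth; rewrite -has_find.
  by apply/code_equivP; apply: nth_find.
have canonE x y : code_equiv x y -> canon x = canon y.
  move=> xy; rewrite /canon; have -> // : find (code_equivb x) Sb = find (code_equivb y) Sb.
  apply: eq_find => z; apply/code_equivP/code_equivP => h.
    exact: ce_trans (ce_sym xy) h.
  exact: ce_trans xy h.
exists (map canon Sb); split.
- split; last split.
  + move=> H /mapP [x xS ->]; have [/inSb [G [B [GS BR ->]]] _] := canonP x xS.
    exact: P1.
  + move=> H gH cH; have [G [B [GS BR E]]] := P2 H gH cH.
    have yS : row_mx G B \in Sb by apply: allpairs_f.
    exists (canon (row_mx G B)); first exact: map_f.
    exact: ce_trans E (canonP _ yS).2.
  + move=> G1 G2 /mapP [x1 x1S ->] /mapP [x2 x2S ->] E.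
    apply: canonE; apply: ce_trans (canonP _ x1S).2 _.
    exact: ce_trans E (ce_sym (canonP _ x2S).2).
- move=> H /mapP [x xS ->]; exact: inSb (canonP x xS).1.
Qed.

Theorem proposition8 (k t : nat) (hk : (1 <= k)%N) (ht : (3 <= t)%N)
  (S : seq 'M['F_2]_(k, (t - 1) * k)) (R : seq 'M['F_2]_k) :
  CIS_reps (t - 1) S -> GL_reps R ->
  (* every code of \overline{S_t} is a t-CIS [tk,k] code *)
  (forall G B, G \in S -> B \in R ->
     gen_mx (row_mx G B) /\ CIS t (row_mx G B)) /\
  (* every t-CIS [tk,k] code is equivalent to some code of \overline{S_t} *)
  (forall H : 'M['F_2]_(k, (t - 1) * k + k), gen_mx H -> CIS t H ->
     exists G B, [/\ G \in S, B \in R & code_equiv H (row_mx G B)]) /\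
  (* hence a set S_t of representatives can be extracted from \overline{S_t} *)
  (exists St : seq 'M['F_2]_(k, (t - 1) * k + k),
     CIS_reps t St /\
     forall H, H \in St -> exists G B, [/\ G \in S, B \in R & H = row_mx G B]).
Proof.
case: t ht S => [|m] // ht; rewrite subSS subn0 => S; apply: main_gen.
by move: ht; rewrite ltnS; apply: leq_trans.
Qed.
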